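(* Let $c \in (0,1/2]$, $t_1 \in [0,1-2c]$, $t_2 \in [t_1+c,1-c]$, and let $p,q \in (0,1)$ with $p \neq q$. Let $F$, $\Lambda_{p,q}$ and $\gamma_r$ be as described in the context. Then for every $r\in\Lambda_{p,q}$, \[ \int_{F\times F}(x-y)\,d\gamma_r(x,y) = \frac{4(t_2-t_1)(q-r)(p-r)}{(p-q)\big(1-c+c(p+q-2r)\big)} - \left(\frac{p+q-2r}{p-q}\right)\int_{F\times F}|x-y|\,d\gamma_r(x,y). \]
   Context: Let $S_1(x)=cx+t_1$ and $S_2(x)=cx+t_2$ on $[0,1]$. Let $F\subseteq[0,1]$ be the unique nonempty compact set with $F=S_1(F)\cup S_2(F)$. For $p\in(0,1)$, $\mu_p$ is the unique Borel probability measure with $\mu_p = p\,\mu_p\circ S_1^{-1} + (1-p)\,\mu_p\circ S_2^{-1}$. On $[0,1]^2$ define $S_{i,j}(x,y)=(S_i(x),S_j(y))$ for $i,j\in\{1,2\}$. Let $\Lambda_{p,q}$ be the open interval $\max\{0,p+q-1\}<r<\min\{p,q\}$. For $r\in\Lambda_{p,q}$, $\gamma_r$ is the unique Borel probability measure on $[0,1]^2$ satisfying $\gamma_r = r\,\gamma_r\circ S_{1,1}^{-1} + (p-r)\,\gamma_r\circ S_{1,2}^{-1} + (q-r)\,\gamma_r\circ S_{2,1}^{-1} + (1-p-q+r)\,\gamma_r\circ S_{2,2}^{-1}$; it is supported on $F\times F$ and is a coupling of $\mu_p$ and $\mu_q$. *)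

(* Defs.v *)
From HB Require Import structures.
From mathcomp Require Import all_boot all_order all_algebra.
From mathcomp Require Import all_classical all_reals all_analysis.
Set Implicit Arguments. Unset Strict Implicit. Unset Printing Implicit Defensive.
Import Order.TTheory GRing.Theory Num.Theory.
Import numFieldNormedType.Exports.
Local Open Scope classical_set_scope.
Local Open Scope ring_scope.

Definition sim {R : realType} (c t : R) (x : R) : R := c * x + t.

Definition sim2 {R : realType} (c ti tj : R) (z : R * R) : R * R :=
  (sim c ti z.1, sim c tj z.2).

Definition is_attractor {R : realType} (c t1 t2 : R) (F : set R) : Prop :=
  F !=set0 /\ compact F /\ F = (sim c t1 @` F) `|` (sim c t2 @` F).

Definition gamma_selfsim {R : realType} (c t1 t2 p q r : R)
    (gamma : probability (R * R)%type R) : Prop :=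
  forall A : set (R * R), measurable A ->
    gamma A =
      (r%:E * gamma (sim2 c t1 t1 @^-1` A)
       + (p - r)%:E * gamma (sim2 c t1 t2 @^-1` A)
       + (q - r)%:E * gamma (sim2 c t2 t1 @^-1` A)
       + (1 - p - q + r)%:E * gamma (sim2 c t2 t2 @^-1` A))%E.

(* Main.v *)
Require Import Defs.
From HB Require Import structures.
From mathcomp Require Import all_boot all_order all_algebra.
From mathcomp Require Import all_classical all_reals all_analysis.
From mathcomp Require Import ring lra measurable_realfun.
Import Order.TTheory GRing.Theory Num.Theory.
Import numFieldNormedType.Exports.
Local Open Scope classical_set_scope.
Local Open Scope ring_scope.
Lemma bnd (R : realType) (T : Type) (A : set T) (f : T -> R) (M : R) :
  (forall x, A x -> `|f x| <= M) -> [bounded f x | x in A].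
Proof.
move=> h; exists M; split; first exact: num_real.
by move=> N hN x Ax; rewrite /= (le_trans (h x Ax))// ltW.
Qed.

Section S.
Variable R : realType.
Variable gamma : probability (R * R)%type R.

Lemma msim2 (c a b : R) : measurable_fun setT (sim2 c a b).
Proof.
have ms : forall t : R, measurable_fun setT (sim c t).
  move=> t; rewrite /sim.
  by apply: measurable_funD; [apply: measurable_funM; [exact: measurable_cst|exact: measurable_id]|exact: measurable_cst].
apply/measurable_fun_pairP; split.
- exact: (measurableT_comp (ms a) measurable_fst).
- exact: (measurableT_comp (ms b) measurable_snd).
Qed.

Definition PF (c a b : R) : {measure set (R*R)%type -> \bar R}.
refine (pushforward gamma (sim2 c a b)). exact: msim2.
Defined.

Definition nng (x : R) : {nonneg R} := if (0 <= x) =P true is ReflectT h then NngNum h else 0%:nng.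
Lemma nngE x : 0 <= x -> (nng x)%:num = x.
Proof. by rewrite /nng; case: eqP. Qed.

Variables (c t1 t2 p q r : R).
Hypothesis hw1 : 0 <= r.
Hypothesis hw2 : 0 <= p - r.
Hypothesis hw3 : 0 <= q - r.
Hypothesis hw4 : 0 <= 1 - p - q + r.
Hypothesis hss : gamma_selfsim c t1 t2 p q r gamma.

Local Open Scope ereal_scope.
Lemma tr_ge0 (D : set (R*R)%type) (f : (R*R)%type -> \bar R) :
  measurable D -> measurable_fun setT f -> (forall z, D z -> 0 <= f z) ->
  \int[gamma]_(z in D) f z =
   r%:E * \int[gamma]_(z in sim2 c t1 t1 @^-1` D) (f \o sim2 c t1 t1) z
 + (p - r)%:E * \int[gamma]_(z in sim2 c t1 t2 @^-1` D) (f \o sim2 c t1 t2) z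
 + (q - r)%:E * \int[gamma]_(z in sim2 c t2 t1 @^-1` D) (f \o sim2 c t2 t1) z
 + (1 - p - q + r)%:E * \int[gamma]_(z in sim2 c t2 t2 @^-1` D) (f \o sim2 c t2 t2) z.
Proof.
move=> mD mf f0.
pose nu := measure_add (measure_add (mscale (nng r) (PF c t1 t1)) (mscale (nng (p - r)) (PF c t1 t2)))
  (measure_add (mscale (nng (q - r)) (PF c t2 t1)) (mscale (nng (1 - p - q + r)) (PF c t2 t2))).
rewrite (eq_measure_integral nu); last first.
  move=> A mA _; apply: etrans; first exact: (hss A mA).
  rewrite /nu /= /msum !big_ord_recl !big_ord0 /= /measure_add /msum !big_ord_recl !big_ord0 /= /mscale /PF /= !nngE // !adde0.
  by rewrite /pushforward !addeA.
have mfD : measurable_fun D f by exact: measurable_funTS.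
rewrite /nu ge0_integral_measure_add //.
rewrite !ge0_integral_measure_add // !ge0_integral_mscale // !nngE //.
rewrite /PF /= !ge0_integral_pushforward //; try by move=> z /set_mem; apply: f0.
all: try exact: msim2.
by rewrite !addeA.
Qed.

Local Close Scope ereal_scope.

Lemma intD (D : set (R*R)%type) (g : (R*R)%type -> R) M : measurable D -> measurable_fun setT g ->
  (forall z, D z -> `|g z| <= M) -> gamma.-integrable D (EFin \o g).
Proof.
move=> mD mg hb; apply: measurable_bounded_integrable => //.
- by rewrite (le_lt_trans (probability_le1 _ mD)) // ltey.
- exact: measurable_funTS.
- exact: bnd hb.
Qed.

Lemma msim2P (a b : R) (A : set (R*R)%type) : measurable A -> measurable (sim2 c a b @^-1` A).
Proof. by move=> mA; rewrite -[_ @^-1` _]setTI; apply: msim2. Qed.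

Lemma negl (a b : R) (D : set (R*R)%type) (g : (R*R)%type -> \bar R) :
  measurable D -> gamma (~` D) = 0%E -> D `<=` sim2 c a b @^-1` D ->
  measurable_fun setT g -> (forall z, D z -> (0 <= g z)%E) ->
  (\int[gamma]_(z in sim2 c a b @^-1` D) (g \o sim2 c a b) z =
  \int[gamma]_(z in D) (g \o sim2 c a b) z)%E.
Proof.
move=> mD D0 DS mg g0.
rewrite (ge0_negligible_integral _ (N := ~` D)) //.
- by rewrite setDE setCK setIidr.
- exact: measurableC.
- exact: msim2P.
- apply: measurable_funTS; apply: measurableT_comp => //; exact: msim2.
- by move=> z /= hz; apply: g0.
Qed.

Lemma trR (D : set (R*R)%type) (f : (R*R)%type -> R) M :
  measurable D -> gamma (~` D) = 0%E ->
  D `<=` sim2 c t1 t1 @^-1` D -> D `<=` sim2 c t1 t2 @^-1` D ->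
  D `<=` sim2 c t2 t1 @^-1` D -> D `<=` sim2 c t2 t2 @^-1` D ->
  measurable_fun setT f -> (forall z, D z -> 0 <= f z <= M) ->
  Rintegral gamma D f =
    r * Rintegral gamma D (f \o sim2 c t1 t1) + (p - r) * Rintegral gamma D (f \o sim2 c t1 t2)
  + (q - r) * Rintegral gamma D (f \o sim2 c t2 t1) + (1 - p - q + r) * Rintegral gamma D (f \o sim2 c t2 t2).
Proof.
move=> mD D0 h11 h12 h21 h22 mf hf.
have mF : measurable_fun setT (EFin \o f) by exact/measurable_EFinP.
have F0 : forall z, D z -> (0 <= (EFin \o f) z)%E.
  by move=> z /hf /andP[] ? _; rewrite lee_fin.
have hb : forall z, D z -> `|f z| <= M.
  by move=> z /hf /andP[] h0 h1; rewrite ger0_norm.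
have iS : forall a b, D `<=` sim2 c a b @^-1` D -> gamma.-integrable D (EFin \o (f \o sim2 c a b)).
  move=> a b h; apply: (@intD _ _ M) => //.
  - apply: measurableT_comp => //; exact: msim2.
  - by move=> z /h /hb.
rewrite /Rintegral (@tr_ge0 D _ mD mF F0).
rewrite !negl //.
have i11 := integrable_fin_num mD (iS _ _ h11).
have i12 := integrable_fin_num mD (iS _ _ h12).
have i21 := integrable_fin_num mD (iS _ _ h21).
have i22 := integrable_fin_num mD (iS _ _ h22).
rewrite -[X in (X + _ + _ + _)%E]fineK; last by apply: fin_numM.
rewrite -[X in (_ + X + _ + _)%E]fineK; last by apply: fin_numM.
rewrite -[X in (_ + _ + X + _)%E]fineK; last by apply: fin_numM.
rewrite -[X in (_ + _ + _ + X)%E]fineK; last by apply: fin_numM.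
by rewrite -!EFinD /= !fineM.
Qed.

Lemma lin (D : set (R*R)%type) (g : (R*R)%type -> R) (k1 k0 : R) :
  measurable D -> gamma D = 1%E -> gamma.-integrable D (EFin \o g) ->
  Rintegral gamma D (fun z => k1 * g z + k0) = k1 * Rintegral gamma D g + k0.
Proof.
move=> mD D1 ig.
have i0 : gamma.-integrable D (EFin \o (fun _ => k0)).
  apply: (@intD _ _ `|k0|) => //.
have i1 : gamma.-integrable D (EFin \o (fun z => k1 * g z)).
  apply: (eq_integrable mD _ _ _ (integrableZl mD k1 ig)) => z _ /=; by rewrite EFinM.
rewrite (RintegralD mD i1 i0).
rewrite RintegralZl // Rintegral_cst //; congr (_ + _).
apply: (@eq_trans _ _ (k0 * fine 1%E)); last by rewrite mulr1.
by congr (_ * fine _); exact: D1.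
Qed.

Lemma GD (G Q : set (R*R)%type) (g : (R*R)%type -> R) :
  measurable G -> measurable Q -> gamma (~` Q) = 0%E -> measurable_fun setT g ->
  Rintegral gamma G g = Rintegral gamma (G `&` Q) g.
Proof.
move=> mG mQ Q0 mg; rewrite /Rintegral integralE [in RHS]integralE.
have mE : measurable_fun setT (EFin \o g) by exact/measurable_EFinP.
have mp : measurable_fun G (funepos (EFin \o g)).
  by apply: measurable_funTS; apply: measurable_funepos.
have mn : measurable_fun G (funeneg (EFin \o g)).
  by apply: measurable_funTS; apply: measurable_funeneg.
have p0 : forall z, G z -> (0 <= (funepos (EFin \o g)) z)%E by move=> z _; apply: funepos_ge0.
have n0 : forall z, G z -> (0 <= (funeneg (EFin \o g)) z)%E by move=> z _; apply: funeneg_ge0.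
rewrite (ge0_negligible_integral (measurableC mQ) mG mp p0 Q0).
rewrite (ge0_negligible_integral (measurableC mQ) mG mn n0 Q0).
by rewrite setDE setCK.
Qed.

End S.

Section K.
Variable R : realType.
Variables (c t1 t2 : R).

Fixpoint K (n : nat) : set R :=
  match n with 0%N => `[0%R, 1%R]%classic
  | n.+1 => sim c t1 @` K n `|` sim c t2 @` K n end.

Lemma sim_img (t : R) (A : set R) : c != 0 -> sim c t @` A = (fun y => (y - t) * c^-1) @^-1` A.
Proof.
move=> c0; apply/seteqP; split => [y [x Ax <-]|y Ay] /=.
  by rewrite /sim addrK mulrC mulKf.
by exists ((y - t) * c^-1) => //; rewrite /sim mulrC mulfVK // subrK.
Qed.

Lemma K_meas n : c != 0 -> measurable (K n).
Proof.
move=> c0; elim: n => [|n IH] /=; first exact: measurable_itv.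
have mi : forall t : R, measurable_fun setT (fun y : R => (y - t) * c^-1).
  move=> t; apply: measurable_funM; last exact: measurable_cst.
  by apply: measurable_funB; [exact: measurable_id|exact: measurable_cst].
apply: measurableU; rewrite sim_img //; rewrite -[_ @^-1` _]setTI; exact: mi.
Qed.

Lemma K_step n a x : (a = t1 \/ a = t2) -> K n x -> K n.+1 (sim c a x).
Proof. by move=> [->|->] Kx /=; [left|right]; exists x. Qed.

Lemma K_near (F : set R) y0 : F y0 -> 0 <= c ->
  (forall x, F x -> F (sim c t1 x)) -> (forall x, F x -> F (sim c t2 x)) ->
  forall n x, K n x -> exists y, F y /\ `|x - y| <= (1 + `|y0|) * c ^+ n.
Proof.
move=> Fy0 c0 F1 F2; elim => [|n IH] x /=.
  rewrite in_itv /= => /andP[x0 x1]; exists y0; split => //.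
  rewrite expr0 mulr1 (le_trans (ler_normB _ _)) // lerD2r ger0_norm //.
move=> [] [w Kw <-]; have [y [Fy hy]] := IH w Kw.
  exists (sim c t1 y); split; first exact: F1.
  rewrite /sim opprD addrACA subrr addr0 -mulrBr normrM ger0_norm // exprS.
  by rewrite mulrCA ler_wpM2l.
exists (sim c t2 y); split; first exact: F2.
rewrite /sim opprD addrACA subrr addr0 -mulrBr normrM ger0_norm // exprS.
by rewrite mulrCA ler_wpM2l.
Qed.

Lemma K_inF (F : set R) y0 : F y0 -> 0 <= c -> c < 1 -> closed F ->
  (forall x, F x -> F (sim c t1 x)) -> (forall x, F x -> F (sim c t2 x)) ->
  forall x, (forall n, K n x) -> F x.
Proof.
move=> Fy0 c0 c1 cF F1 F2 x Kx; apply: contrapT => nFx.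
have : (~` F) x by [].
have oC : open (~` F) by exact: closed_openC.
move/(oC x)/nbhs_ballP => [e /= e0 be].
have M0 : 0 < 1 + `|y0| by rewrite ltr_pwDl.
have cv : (GRing.exp c : R^nat) @ \oo --> 0 by apply: cvg_expr; rewrite ger0_norm.
have [N _ hN] := cvgr0_norm_lt _ cv _ (divr_gt0 e0 M0).
have hc := hN N (leqnn N); rewrite /= ger0_norm ?exprn_ge0 // in hc.
have [y [Fy hy]] := @K_near F y0 Fy0 c0 F1 F2 N x (Kx N).
apply: (be y) => //.
rewrite -ball_normE /= (le_lt_trans hy) //.
by rewrite mulrC -ltr_pdivlMr.
Qed.
End K.


Theorem lemma3p1 (R : realType) (c t1 t2 p q r : R) (F : set R)
    (gamma : probability (R * R)%type R) :
  0 < c -> c <= 1 / 2 ->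
  0 <= t1 -> t1 <= 1 - 2 * c ->
  t1 + c <= t2 -> t2 <= 1 - c ->
  0 < p -> p < 1 -> 0 < q -> q < 1 -> p != q ->
  is_attractor c t1 t2 F ->
  Num.max 0 (p + q - 1) < r -> r < Num.min p q ->
  gamma (`[0, 1] `*` `[0, 1]) = 1%E ->
  gamma_selfsim c t1 t2 p q r gamma ->
  Rintegral gamma (F `*` F) (fun z => z.1 - z.2) =
    4 * (t2 - t1) * (q - r) * (p - r) / ((p - q) * (1 - c + c * (p + q - 2 * r)))
    - (p + q - 2 * r) / (p - q) * Rintegral gamma (F `*` F) (fun z => `|z.1 - z.2|).
Proof.
move=> c0 c12 t10 t1b t2a t2b p0 p1 q0 q1 pq [[y0 Fy0] [cF Feq]] rlo rhi Q1 hss.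
move: rlo; rewrite gt_max => /andP[r0 rpq].
move: rhi; rewrite lt_min => /andP[rp rq].
have hw1 : 0 <= r by exact: ltW.
have hw2 : 0 <= p - r by rewrite subr_ge0 ltW.
have hw3 : 0 <= q - r by rewrite subr_ge0 ltW.
have hw4 : 0 <= 1 - p - q + r by lra.
have c1 : c < 1 by lra.
have clF : closed F := compact_closed (@Rhausdorff R) cF.
have mF : measurable F := closed_measurable clF.
have F1 : forall x, F x -> F (sim c t1 x) by move=> x Fx; rewrite Feq; left; exists x.
have F2 : forall x, F x -> F (sim c t2 x) by move=> x Fx; rewrite Feq; right; exists x.
pose Q : set (R * R)%type := `[0%R, 1%R]%classic `*` `[0%R, 1%R]%classic.
have mQ : measurable Q by apply: measurableX; exact: measurable_itv.
have Q0 : gamma (~` Q) = 0%E.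
  by rewrite probability_setC // Q1 subee.
pose L n : set (R * R)%type := @K R c t1 t2 n `*` @K R c t1 t2 n.
have mK : forall n, measurable (@K R c t1 t2 n) by move=> n; apply: K_meas; rewrite gt_eqF.
have mL : forall n, measurable (L n) by move=> n; apply: measurableX.
have L1 : forall n, gamma (L n) = 1%E.
  elim => [|n IH]; first exact: Q1.
  have hsub : forall a b, (a = t1 \/ a = t2) -> (b = t1 \/ b = t2) ->
      gamma (sim2 c a b @^-1` L n.+1) = 1%E.
    move=> a b ha hb.
    have mS : measurable (sim2 c a b @^-1` L n.+1) by apply: msim2P.
    apply/eqP; rewrite eq_le (probability_le1 _ mS) /=.
    rewrite -IH; apply: le_measure; rewrite ?inE //.
    by move=> z [z1 z2]; split; apply: K_step.
  rewrite (hss _ (mL n.+1)).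
  rewrite !hsub; try by [left|right].
  by rewrite !mule1 -!EFinD; congr EFin; ring.
pose D := (F `*` F) `&` Q.
have mD : measurable D by apply: measurableI => //; apply: measurableX.
have Dsub : ~` D `<=` \bigcup_n ~` L n.
  move=> z nD; apply: contrapT => hn; apply: nD.
  have hL : forall n, L n z by move=> n; apply: contrapT => h; apply: hn; exists n.
  split; last exact: (hL 0%N).
  split.
  - apply: (@K_inF R c t1 t2 F y0) => //; first exact: ltW.
    by move=> n; case: (hL n).
  - apply: (@K_inF R c t1 t2 F y0) => //; first exact: ltW.
    by move=> n; case: (hL n).
have D0 : gamma (~` D) = 0%E.
  have hn : forall n, gamma.-negligible (~` L n).
    move=> n; exists (~` L n); split => //; first exact: measurableC.
    by rewrite probability_setC // L1 subee.
  have [N [mN N0 sN]] := negligible_bigcup hn.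
  apply/eqP; rewrite eq_le measure_ge0 andbT -N0; apply: le_measure; rewrite ?inE //.
    exact: measurableC.
  exact: subset_trans Dsub sN.
have D1 : gamma D = 1%E.
  move: D0; rewrite probability_setC //.
  have fD : gamma D \is a fin_num by rewrite ge0_fin_numE ?measure_ge0 // (le_lt_trans (probability_le1 _ mD)) // ltey.
  rewrite -(fineK fD) -EFinB => -[] /eqP; rewrite subr_eq0 => /eqP <-; done.
have Dss : forall a b, (a = t1 \/ a = t2) -> (b = t1 \/ b = t2) -> D `<=` sim2 c a b @^-1` D.
  move=> a b ha hb [x y] [[Fx Fy] [/= hx hy]].
  move: hx hy; rewrite !in_itv /= => /andP[x0 x1] /andP[y0' y1].
  have ha0 : 0 <= a /\ a <= 1 - c by case: ha => ->; lra.
  have hb0 : 0 <= b /\ b <= 1 - c by case: hb => ->; lra.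
  split; [split|split] => /=.
  - by case: ha => ->; [apply: F1|apply: F2].
  - by case: hb => ->; [apply: F1|apply: F2].
  - rewrite in_itv /= /sim; apply/andP; split; nra.
  - rewrite in_itv /= /sim; apply/andP; split; nra.
have hDb : forall z, D z -> 0 <= z.1 <= 1 /\ 0 <= z.2 <= 1.
  by move=> [x y] [_ [/= hx hy]]; move: hx hy; rewrite !in_itv /=.
pose g1 := fun z : (R * R)%type => z.1 - z.2.
have mg1 : measurable_fun setT g1.
  by apply: measurable_funB; [exact: measurable_fst|exact: measurable_snd].
have mg2 : measurable_fun setT (fun z => `|g1 z|).
  by apply: measurableT_comp => //; exact: normr_measurable.
have ig1 : gamma.-integrable D (EFin \o g1).
  apply: (@intD _ _ _ _ 1) => // z /hDb [] /andP[? ?] /andP[? ?].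
  rewrite ler_norml /g1; apply/andP; split; lra.
have ig2 : gamma.-integrable D (EFin \o (fun z => `|g1 z|)).
  apply: (@intD _ _ _ _ 1) => // z /hDb [] /andP[? ?] /andP[? ?].
  rewrite normr_id ler_norml /g1; apply/andP; split; lra.
have d11 := Dss t1 t1 (or_introl erefl) (or_introl erefl).
have d12 := Dss t1 t2 (or_introl erefl) (or_intror erefl).
have d21 := Dss t2 t1 (or_intror erefl) (or_introl erefl).
have d22 := Dss t2 t2 (or_intror erefl) (or_intror erefl).
have mf1 : measurable_fun setT (fun z => g1 z + 1).
  by apply: measurable_funD => //; exact: measurable_cst.
have E1 := @trR R gamma c t1 t2 p q r hw1 hw2 hw3 hw4 hss D (fun z => g1 z + 1) 2 mD D0 d11 d12 d21 d22 mf1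
  (fun z hz => ltac:(move: (hDb z hz) => [] /andP[? ?] /andP[? ?]; rewrite /g1; apply/andP; split; lra)).
have E2 := @trR R gamma c t1 t2 p q r hw1 hw2 hw3 hw4 hss D (fun z => `|g1 z|) 1 mD D0 d11 d12 d21 d22 mg2
  (fun z hz => ltac:(move: (hDb z hz) => [] /andP[? ?] /andP[? ?]; rewrite /g1 normr_ge0 /= ler_norml; apply/andP; split; lra)).
have k1 : forall a b, Rintegral gamma D ((fun z => g1 z + 1) \o sim2 c a b) = c * Rintegral gamma D g1 + (a - b + 1).
  move=> a b; rewrite -(@lin R gamma D g1 c (a - b + 1) mD D1 ig1).
  by apply: eq_Rintegral => z _ /=; rewrite /g1 /sim2 /sim /=; ring.
have k0 : Rintegral gamma D (fun z => g1 z + 1) = Rintegral gamma D g1 + 1.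
  rewrite -[Rintegral gamma D g1 in RHS]mul1r -(@lin R gamma D g1 1 1 mD D1 ig1).
  by apply: eq_Rintegral => z _ /=; rewrite mul1r.
have kaa : forall a, Rintegral gamma D ((fun z => `|g1 z|) \o sim2 c a a) = c * Rintegral gamma D (fun z => `|g1 z|) + 0.
  move=> a; rewrite -(@lin R gamma D (fun z => `|g1 z|) c 0 mD D1 ig2).
  apply: eq_Rintegral => z _ /=; rewrite /g1 /sim2 /sim /= addr0.
  have -> : c * z.1 + a - (c * z.2 + a) = c * (z.1 - z.2) by ring.
  by rewrite normrM gtr0_norm.
have k12 : Rintegral gamma D ((fun z => `|g1 z|) \o sim2 c t1 t2) = (- c) * Rintegral gamma D g1 + (t2 - t1).
  rewrite -(@lin R gamma D g1 (- c) (t2 - t1) mD D1 ig1).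
  apply: eq_Rintegral => z; rewrite in_setE => /hDb [] /andP[? ?] /andP[? ?] /=.
  rewrite /g1 /sim2 /sim /= ler0_norm; first ring.
  nra.
have k21 : Rintegral gamma D ((fun z => `|g1 z|) \o sim2 c t2 t1) = c * Rintegral gamma D g1 + (t2 - t1).
  rewrite -(@lin R gamma D g1 c (t2 - t1) mD D1 ig1).
  apply: eq_Rintegral => z; rewrite in_setE => /hDb [] /andP[? ?] /andP[? ?] /=.
  rewrite /g1 /sim2 /sim /= ger0_norm; first ring.
  nra.
rewrite k0 !k1 in E1.
rewrite !kaa k12 k21 in E2.
rewrite (@GD R gamma (F `*` F) Q (fun z => z.1 - z.2) (measurableX mF mF) mQ Q0 mg1).
rewrite (@GD R gamma (F `*` F) Q (fun z => `|z.1 - z.2|) (measurableX mF mF) mQ Q0 mg2).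
change (Rintegral gamma D g1 = 4 * (t2 - t1) * (q - r) * (p - r) / ((p - q) * (1 - c + c * (p + q - 2 * r)))
    - (p + q - 2 * r) / (p - q) * Rintegral gamma D (fun z => `|g1 z|)).
move: E1 E2; set I := Rintegral gamma D g1; set J := Rintegral gamma D (fun z => `|g1 z|) => E1 E2.
have e1 : I * (1 - c) - (q - p) * (t2 - t1) = 0.
  move/eqP: E1; rewrite -subr_eq0 => /eqP <-; ring.
have e2 : J * (1 - c + c * (p + q - 2 * r)) - ((t2 - t1) * (p + q - 2 * r) + c * I * (q - p)) = 0.
  move/eqP: E2; rewrite -subr_eq0 => /eqP <-; ring.
have hDn : 1 - c + c * (p + q - 2 * r) != 0.
  apply/lt0r_neq0; have : 0 < c * (p + q - 2 * r) by apply: mulr_gt0 => //; lra.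
  lra.
have hpq : p - q != 0 by rewrite subr_eq0.
have key : 4 * (t2 - t1) * (q - r) * (p - r) - (p + q - 2 * r) * (1 - c + c * (p + q - 2 * r)) * J
   = I * ((p - q) * (1 - c + c * (p + q - 2 * r))).
  apply/eqP; rewrite -subr_eq0; apply/eqP.
  rewrite -[RHS](_ : (q - p) * 0 + (2 * r - p - q) * 0 = 0); last by rewrite !mulr0 addr0.
  rewrite -{1}e1 -e2; ring.
have hm : (p - q) * (1 - c + c * (p + q - 2 * r)) != 0 by rewrite mulf_neq0.
rewrite -[I](mulfK hm) -key.
rewrite mulrBl; congr (_ - _).
rewrite invfM [_^-1 * _]mulrC mulrA [X in X * _ = _]mulrAC mulfK //.
by rewrite mulrAC.
Qed.
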